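(* For every history formula $\varphi$ of CTL*KΔ$_m$ of knowledge depth $k$, every multiagent model $M$, every history $h$ of $M$ and every record tuple $\vec r$ that stops at $h$: $$h,\vec r\models\varphi\quad\text{iff}\quad \mathit{KT}^k(h,\vec r),\ \vec o(h,\vec r)\models_I\varphi.$$
   Context: Fix a countably infinite set $\mathit{AP}$ of atomic propositions, a finite nonempty set $\mathit{Obs}$ of observations, and a finite set of agents $\mathit{Ag}=\{a_1,\dots,a_m\}$. For a word $w$ we write $w_i$ for its letter at position $i$ (positions start at $0$), $w_{\le i}$ for its prefix ending at position $i$, $w_{\ge i}$ for its suffix starting at position $i$, $|w|$ for its length (finite words) and $\mathit{last}(w)$ for its last letter; $w\preceq w'$ means $w$ is a prefix of $w'$. Syntax of CTL*KΔ$_m$: history formulas $\varphi::=p\mid\neg\varphi\mid\varphi\wedge\varphi\mid\mathbf A\psi\mid\mathbf K_a\varphi\mid\Delta^{o}_a\varphi$ and path formulas $\psi::=\varphi\mid\neg\psi\mid\psi\wedge\psi\mid\mathbf X\psi\mid\psi\,\mathbf U\,\psi$, with $p\in\mathit{AP}$, $a\in\mathit{Ag}$, $o\in\mathit{Obs}$; formulas are history formulas. The knowledge depth of a formula is the maximal nesting depth of operators $\mathbf K_a$ (over all agents). A multiagent model is $M=(\mathit{AP}_f,S,T,V,\{\sim_o\}_{o\in\mathit{Obs}},s_\iota,\vec o_\iota)$ where $\mathit{AP}_f\subseteq\mathit{AP}$ is finite, $S$ is a finite set of states, $T\subseteq S\times S$ is left-total, $V:S\to2^{\mathit{AP}_f}$,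 each $\sim_o$ is an equivalence relation on $S$, $s_\iota\in S$, and $\vec o_\iota\in\mathit{Obs}^{\mathit{Ag}}$ gives each agent an initial observation. Paths are infinite sequences of states $s_0s_1\dots$ with $s_iTs_{i+1}$ (starting anywhere); histories are finite nonempty prefixes of paths. For a tuple $\vec o\in\mathit{Obs}^{\mathit{Ag}}$, $\vec o_a$ is its $a$-component, $\vec o_i=\vec o_{a_i}$, and $\vec o[a\leftarrow o']$ is $\vec o$ with $\vec o_a$ replaced by $o'$. An observation record is a finite word over $\mathit{Obs}\times\mathbb N$; $r_{=n}$ is the subword of $r$ consisting of the pairs with second component $n$; $r$ stops at $n$ if $r_{=m}$ is empty for all $m>n$. A record tuple is $\vec r=(\vec r_a)_{a\in\mathit{Ag}}$; $\vec r\cdot(o,n)_a$ is $\vec r$ with $\vec r_a$ replaced by $\vec r_a\cdot(o,n)$; $\vec r$ stops at a history $h$ if each $\vec r_a$ stops at $|h|-1$. For agent $a$: $\mathit{ol}_a(\vec r,0)=\vec o_{\iota,a}\cdot o_1\cdots o_k$ if $(\vec r_a)_{=0}=(o_1,0)\cdots(o_k,0)$, and $\mathit{ol}_a(\vec r,n+1)=\mathit{last}(\mathit{ol}_a(\vec r,n))\cdot o_1\cdots o_k$ if $(\vec r_a)_{=n+1}=(o_1,n+1)\cdots(o_k,n+1)$. $h\approx^{\vec r}_a h'$ iff $|h|=|h'|$ and for all $i<|h|$ and all $o$ in $\mathit{ol}_a(\vec r,i)$, $h_i\sim_o h'_i$. $\vec o(h,\vec r)$ is the tuple whose $a$-component is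 the last element of $\mathit{ol}_a(\vec r,|h|-1)$. Natural semantics: $h,\vec r\models p$ iff $p\in V(\mathit{last}(h))$; negation and conjunction as usual; $h,\vec r\models\mathbf A\psi$ iff for all paths $\pi$ with $h\preceq\pi$, $\pi,|h|-1,\vec r\models\psi$; $h,\vec r\models\mathbf K_a\varphi$ iff $h',\vec r\models\varphi$ for all histories $h'\approx^{\vec r}_a h$; $h,\vec r\models\Delta^o_a\varphi$ iff $h,\vec r\cdot(o,|h|-1)_a\models\varphi$; $\pi,n,\vec r\models\varphi$ iff $\pi_{\le n},\vec r\models\varphi$; negation and conjunction as usual; $\pi,n,\vec r\models\mathbf X\psi$ iff $\pi,n+1,\vec r\models\psi$; $\pi,n,\vec r\models\psi_1\mathbf U\psi_2$ iff there is $m\ge n$ with $\pi,m,\vec r\models\psi_2$ and $\pi,j,\vec r\models\psi_1$ for all $n\le j<m$. $k$-trees: a $0$-tree is $\langle s,\emptyset,\dots,\emptyset\rangle$ with $s\in S$; a $(k+1)$-tree is $\langle s,F_1,\dots,F_m\rangle$ with $s\in S$ and each $F_i$ a set of $k$-trees; $\mathit{root}(\langle s,F_1,\dots,F_m\rangle)=s$ and $\tau(a_i)=F_i$. $\mathit{KT}^0(h,\vec r)=\langle\mathit{last}(h),\emptyset,\dots,\emptyset\rangle$ and $\mathit{KT}^{k+1}(h,\vec r)=\langle\mathit{last}(h),F_1,\dots,F_m\rangle$ with $F_i=\{\mathit{KT}^k(h',\vec r)\mid h'\approx^{\vec r}_{a_i}h\}$. Updates: $U_T^0(\langle s,\emptyset,\dots\rangle,s',\vec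 o)=\langle s',\emptyset,\dots,\emptyset\rangle$; $U_T^{k+1}(\langle s,F_1,\dots,F_m\rangle,s',\vec o)=\langle s',F'_1,\dots,F'_m\rangle$ with $F'_i=\{U_T^k(\tau,s'',\vec o)\mid\tau\in F_i,\ s''\sim_{\vec o_i}s',\ \mathit{root}(\tau)Ts''\}$. $U_\Delta^0(\langle s,\emptyset,\dots\rangle,o,a_i)=\langle s,\emptyset,\dots,\emptyset\rangle$; $U_\Delta^{k+1}(\langle s,F_1,\dots,F_m\rangle,o,a_i)=\langle s,F'_1,\dots,F'_m\rangle$ with $F'_j=\{U_\Delta^k(\tau,o,a_i)\mid\tau\in F_j\}$ for $j\ne i$ and $F'_i=\{U_\Delta^k(\tau,o,a_i)\mid\tau\in F_i,\ \mathit{root}(\tau)\sim_o s\}$. (Below, $U_T^k,U_\Delta^k$ are applied to trees of the matching depth $k$.) Alternative semantics, for a $k$-tree $\tau$ and $\vec o\in\mathit{Obs}^{\mathit{Ag}}$: $\tau,\vec o\models_I p$ iff $p\in V(\mathit{root}(\tau))$; negation and conjunction as usual; $\tau,\vec o\models_I\mathbf A\psi$ iff for all paths $\pi$ with $\pi_0=\mathit{root}(\tau)$, $\pi,\tau,\vec o\models_I\psi$; $\tau,\vec o\models_I\mathbf K_a\varphi$ iff $\tau',\vec o\models_I\varphi$ for all $\tau'\in\tau(a)$; $\tau,\vec o\models_I\Delta^{o'}_a\varphi$ iff $U_\Delta^k(\tau,o',a),\vec o[a\leftarrow o']\models_I\varphi$; $\pi,\tau,\vec o\models_I\varphi$ iff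 $\tau,\vec o\models_I\varphi$; negation and conjunction as usual; $\pi,\tau,\vec o\models_I\mathbf X\psi$ iff $\pi_{\ge1},U_T^k(\tau,\pi_1,\vec o),\vec o\models_I\psi$; $\pi,\tau,\vec o\models_I\psi_1\mathbf U\psi_2$ iff there is $n\ge0$ with $\pi_{\ge n},(U_T^k)^n(\tau,\pi,\vec o),\vec o\models_I\psi_2$ and $\pi_{\ge j},(U_T^k)^j(\tau,\pi,\vec o),\vec o\models_I\psi_1$ for all $0\le j<n$, where $(U_T^k)^0(\tau,\pi,\vec o)=\tau$ and $(U_T^k)^{n+1}(\tau,\pi,\vec o)=U_T^k((U_T^k)^n(\tau,\pi,\vec o),\pi_{n+1},\vec o)$. *)

(* Defs.v *)
From mathcomp Require Import all_boot.
Set Implicit Arguments. Unset Strict Implicit. Unset Printing Implicit Defensive.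

(* Atomic propositions: AP = nat (countably infinite). Agents: a finType Ag.
   Observations: a finType Obs (nonemptiness is a hypothesis of the theorem). *)

Section Formulas.
Variables (Ag Obs : finType).

Inductive hform : Type :=
  | HAtom of nat
  | HNot of hform
  | HAnd of hform & hform
  | HA of pform
  | HK of Ag & hform
  | HDelta of Ag & Obs & hform
with pform : Type :=
  | PH of hform
  | PNot of pform
  | PAnd of pform & pform
  | PX of pform
  | PU of pform & pform.

Fixpoint kdepth (f : hform) : nat :=
  match f with
  | HAtom _ => 0
  | HNot g => kdepth g
  | HAnd g1 g2 => maxn (kdepth g1) (kdepth g2)
  | HA p => kdepthP p
  | HK _ g => (kdepth g).+1
  | HDelta _ _ g => kdepth g
  end
with kdepthP (p : pform) : nat :=
  match p with
  | PH g => kdepth g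
  | PNot q => kdepthP q
  | PAnd q1 q2 => maxn (kdepthP q1) (kdepthP q2)
  | PX q => kdepthP q
  | PU q1 q2 => maxn (kdepthP q1) (kdepthP q2)
  end.

End Formulas.

Record model (Ag Obs : finType) := Model {
  st : finType;
  APf : seq nat;
  trans : rel st;
  trans_total : forall s, exists s', trans s s';
  val : st -> nat -> bool;
  val_APf : forall s p, val s p -> p \in APf;
  sim : Obs -> rel st;
  sim_equiv : forall o, equivalence_rel (sim o);
  s_init : st;
  o_init : Ag -> Obs
}.
Arguments st {Ag Obs} m.
Arguments APf {Ag Obs} m.
Arguments trans {Ag Obs} m.
Arguments val {Ag Obs} m.
Arguments sim {Ag Obs} m.
Arguments s_init {Ag Obs} m.
Arguments o_init {Ag Obs} m.

Section Semantics.
Variables (Ag Obs : finType) (M : model Ag Obs).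
Local Notation S := (st M).
Local Notation T := (trans M).
Local Notation sι := (s_init M).

Definition ispath (pi : nat -> S) : Prop := forall i, T (pi i) (pi i.+1).

Definition hprefix (h : seq S) (pi : nat -> S) : Prop :=
  forall i, i < size h -> nth sι h i = pi i.

Definition history (h : seq S) : Prop :=
  h <> [::] /\ exists pi, ispath pi /\ hprefix h pi.

Definition hlast (h : seq S) : S := last sι h.

Definition pref (pi : nat -> S) (n : nat) : seq S := mkseq pi n.+1.

Definition rtuple := Ag -> seq (Obs * nat).

Definition obs_at (r : seq (Obs * nat)) (n : nat) : seq Obs :=
  [seq x.1 | x <- r & x.2 == n].

(* last element of ol_a(r, n) *)
Fixpoint ol_last (r : rtuple) (a : Ag) (n : nat) : Obs :=
  match n with
  | 0 => last (o_init M a) (obs_at (r a) 0)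
  | n'.+1 => last (ol_last r a n') (obs_at (r a) n'.+1)
  end.

Definition ol (r : rtuple) (a : Ag) (n : nat) : seq Obs :=
  match n with
  | 0 => o_init M a :: obs_at (r a) 0
  | n'.+1 => ol_last r a n' :: obs_at (r a) n'.+1
  end.

Definition approx (a : Ag) (r : rtuple) (h h' : seq S) : Prop :=
  size h = size h' /\
  forall i, i < size h -> forall o, o \in ol r a i -> sim M o (nth sι h i) (nth sι h' i).

Definition ovec (h : seq S) (r : rtuple) : Ag -> Obs :=
  fun a => ol_last r a (size h).-1.

Definition rstops (r : seq (Obs * nat)) (n : nat) : Prop :=
  forall m, n < m -> [seq x <- r | x.2 == m] = [::].

Definition stops_at (r : rtuple) (h : seq S) : Prop :=
  forall a, rstops (r a) (size h).-1.

Definition rupd (r : rtuple) (a : Ag) (o : Obs) (n : nat) : rtuple :=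
  fun b => if b == a then rcons (r b) (o, n) else r b.

Fixpoint semN (h : seq S) (r : rtuple) (f : hform Ag Obs) {struct f} : Prop :=
  match f with
  | HAtom p => val M (hlast h) p
  | HNot g => ~ semN h r g
  | HAnd g1 g2 => semN h r g1 /\ semN h r g2
  | HA p => forall pi, ispath pi -> hprefix h pi -> semP pi (size h).-1 r p
  | HK a g => forall h', history h' -> approx a r h' h -> semN h' r g
  | HDelta a o g => semN h (rupd r a o (size h).-1) g
  end
with semP (pi : nat -> S) (n : nat) (r : rtuple) (p : pform Ag Obs) {struct p} : Prop :=
  match p with
  | PH g => semN (pref pi n) r g
  | PNot q => ~ semP pi n r q
  | PAnd q1 q2 => semP pi n r q1 /\ semP pi n r q2
  | PX q => semP pi n.+1 r q
  | PU q1 q2 => exists m, n <= m /\ semP pi m r q2 /\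
                  forall j, n <= j -> j < m -> semP pi j r q1
  end.

(* k-trees: a 0-tree <s, ∅, ..., ∅> is represented by its root s;
   a (k+1)-tree <s, F_1, ..., F_m> by the pair (s, fun a => F_a), sets being
   predicates on k-trees. *)
Fixpoint ktree (k : nat) : Type :=
  match k with
  | 0 => S
  | k'.+1 => (S * (Ag -> ktree k' -> Prop))%type
  end.

Definition kroot (k : nat) : ktree k -> S :=
  match k return ktree k -> S with
  | 0 => fun t => t
  | k'.+1 => fun t => t.1
  end.

Fixpoint KT (k : nat) (h : seq S) (r : rtuple) : ktree k :=
  match k return ktree k with
  | 0 => hlast h
  | k'.+1 => (hlast h, fun a t => exists h', history h' /\ approx a r h' h /\ t = KT k' h' r)
  end.

Fixpoint UT (k : nat) : ktree k -> S -> (Ag -> Obs) -> ktree k :=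
  match k return ktree k -> S -> (Ag -> Obs) -> ktree k with
  | 0 => fun _ s' _ => s'
  | k'.+1 => fun t s' ov =>
      (s', fun a t' => exists t0 s'', t.2 a t0 /\ sim M (ov a) s'' s' /\
                         T (kroot t0) s'' /\ t' = UT t0 s'' ov)
  end.

Fixpoint UD (k : nat) : ktree k -> Obs -> Ag -> ktree k :=
  match k return ktree k -> Obs -> Ag -> ktree k with
  | 0 => fun t _ _ => t
  | k'.+1 => fun t o a =>
      (t.1, fun j t' => exists t0, t.2 j t0 /\ (j = a -> sim M o (kroot t0) t.1) /\
                           t' = UD t0 o a)
  end.

Fixpoint UTn (k : nat) (t : ktree k) (pi : nat -> S) (ov : Ag -> Obs) (n : nat) : ktree k :=
  match n with
  | 0 => t
  | n'.+1 => UT (UTn t pi ov n') (pi n'.+1) ov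
  end.

Definition ovupd (ov : Ag -> Obs) (a : Ag) (o : Obs) : Ag -> Obs :=
  fun b => if b == a then o else ov b.

Definition psuffix (pi : nat -> S) (n : nat) : nat -> S := fun i => pi (n + i).

Definition kchild (k : nat) : ktree k.+1 -> Ag -> ktree k -> Prop := fun t => t.2.

Fixpoint semI (k : nat) (t : ktree k) (ov : Ag -> Obs) (f : hform Ag Obs) {struct f} : Prop :=
  match f with
  | HAtom p => val M (kroot t) p
  | HNot g => ~ semI t ov g
  | HAnd g1 g2 => semI t ov g1 /\ semI t ov g2
  | HA p => forall pi, ispath pi -> pi 0 = kroot t -> semIP pi t ov p
  | HK a g =>
      (match k return ktree k -> Prop with
       | 0 => fun _ => True    (* tau(a) is empty for a 0-tree *)
       | k'.+1 => fun t => forall t', t.2 a t' -> semI t' ov g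
       end) t
  | HDelta a o g => semI (UD t o a) (ovupd ov a o) g
  end
with semIP (k : nat) (pi : nat -> S) (t : ktree k) (ov : Ag -> Obs) (p : pform Ag Obs)
  {struct p} : Prop :=
  match p with
  | PH g => semI t ov g
  | PNot q => ~ semIP pi t ov q
  | PAnd q1 q2 => semIP pi t ov q1 /\ semIP pi t ov q2
  | PX q => semIP (psuffix pi 1) (UT t (pi 1) ov) ov q
  | PU q1 q2 => exists n, semIP (psuffix pi n) (UTn t pi ov n) ov q2 /\
                  forall j, j < n -> semIP (psuffix pi j) (UTn t pi ov j) ov q1
  end.

End Semantics.

(* Main.v *)
Require Import Defs.
From mathcomp Require Import all_boot zify.
From Stdlib Require Import FunctionalExtensionality PropExtensionality.
Set Implicit Arguments. Unset Strict Implicit. Unset Printing Implicit Defensive.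

Section Proof.
Variables (Ag Obs : finType) (M : model Ag Obs).
Local Notation S := (st M).
Local Notation T := (trans M).
Local Notation si := (s_init M).

Definition nxt (s : S) : S := odflt s [pick s' | T s s'].
Lemma nxtP s : T s (nxt s).
Proof.
rewrite /nxt; case: pickP => [x //|H].
by have [s' Hs] := trans_total s; move: (H s'); rewrite Hs.
Qed.

Lemma exists_path (s : S) : exists pi, ispath pi /\ pi 0 = s.
Proof. exists (fun i => iter i nxt s); split => // i /=; exact: nxtP. Qed.

Definition glue (h : seq S) (pi : nat -> S) (i : nat) : S :=
  if i < (size h).-1 then nth si h i else pi (i - (size h).-1).

Lemma hlast_nth (h : seq S) : hlast h = nth si h (size h).-1.
Proof. by rewrite /hlast nth_last. Qed.

Lemma glueP (h : seq S) (pi : nat -> S) : history h -> ispath pi -> pi 0 = hlast h ->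
  ispath (glue h pi) /\ hprefix h (glue h pi).
Proof.
move=> [hn [rho [Pr Hr]]] Ppi P0.
have sz : 0 < size h by case: (h) hn.
split.
- move=> i; rewrite /glue.
  case: (ltnP i (size h).-1) => Hi.
  + case: (ltnP i.+1 (size h).-1) => Hi1.
    * rewrite !Hr; [exact: Pr | lia | lia].
    * have -> : i.+1 - (size h).-1 = 0 by lia.
      have Ei : i.+1 = (size h).-1 by lia.
      rewrite P0 hlast_nth -Ei !Hr; [exact: Pr | lia | lia].
  + rewrite ltnNge (leqW Hi) /=.
    have -> : i.+1 - (size h).-1 = (i - (size h).-1).+1 by lia.
    exact: Ppi.
- move=> i Hi; rewrite /glue.
  case: (ltnP i (size h).-1) => Hi' //.
  have Ei : i = (size h).-1 by lia.
  by rewrite Ei subnn P0 hlast_nth.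
Qed.

Lemma glue_suffix (h : seq S) (pi : nat -> S) : psuffix (glue h pi) (size h).-1 = pi.
Proof.
apply: functional_extensionality => i; rewrite /psuffix /glue.
by rewrite ltnNge leq_addr /= addKn.
Qed.

Lemma pref_prefix (h : seq S) (pi : nat -> S) : h <> [::] -> hprefix h pi -> pref pi (size h).-1 = h.
Proof.
move=> hn Hp; have sz : 0 < size h by case: (h) hn.
apply: (@eq_from_nth _ si); rewrite size_mkseq; first lia.
move=> i Hi; rewrite nth_mkseq; last by []. rewrite Hp //; lia.
Qed.

Lemma pref_history (pi : nat -> S) n : ispath pi -> history (pref pi n).
Proof.
move=> P; split; first by rewrite /pref mkseqS; case: (mkseq _ _).
exists pi; split => // i; rewrite size_mkseq => Hi; by rewrite nth_mkseq.
Qed.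

Lemma pref_prefix2 (pi : nat -> S) n : hprefix (pref pi n) pi.
Proof. move=> i; rewrite size_mkseq => Hi; by rewrite nth_mkseq. Qed.

Lemma history_rcons (h : seq S) (s : S) : h <> [::] ->
  (history (rcons h s) <-> history h /\ T (hlast h) s).
Proof.
move=> hn; have sz : 0 < size h by case: (h) hn.
split.
- move=> [_ [rho [Pr Hr]]]; split.
  + split => //; exists rho; split => // i Hi.
    rewrite -Hr ?size_rcons; last lia. by rewrite nth_rcons Hi.
  + have E1 : hlast h = rho (size h).-1.
      rewrite hlast_nth -Hr ?size_rcons; last lia. rewrite nth_rcons; have -> : (size h).-1 < size h by lia. done.
    have E2 : s = rho (size h).
      rewrite -Hr ?size_rcons // nth_rcons ltnn eqxx //.
    rewrite E1 E2. have {2}-> : size h = (size h).-1.+1 by lia. exact: Pr.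
- move=> [Hh Ht].
  have [sig [Ps P0]] := exists_path s.
  pose p := fun i => if i is i'.+1 then sig i' else hlast h.
  have Pp : ispath p by case=> [|i] /=; [rewrite P0 | apply: Ps].
  have [Pg Hg] := glueP Hh Pp erefl.
  split; first by case: (h) hn.
  exists (glue h p); split => // i; rewrite size_rcons ltnS leq_eqVlt => /orP [/eqP ->|Hi].
  + rewrite nth_rcons ltnn eqxx /glue ltnNge; have -> : (size h).-1 <= size h by lia.
    have -> : size h - (size h).-1 = 1 by lia. by rewrite /= P0.
  + by rewrite nth_rcons Hi Hg.
Qed.


Lemma obs_at_rupd (r : rtuple Ag Obs) a o n b i :
  obs_at (rupd r a o n b) i =
  if (b == a) && (n == i) then rcons (obs_at (r b) i) o else obs_at (r b) i.
Proof.
rewrite /rupd /obs_at; case: (b == a) => //=.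
by rewrite filter_rcons /=; case: (n == i) => //; rewrite map_rcons.
Qed.

Lemma ol_last_rupd_lt (r : rtuple Ag Obs) a o n b i : i < n ->
  ol_last M (rupd r a o n) b i = ol_last M r b i.
Proof.
elim: i => [|i IH] Hi /=; rewrite obs_at_rupd.
- have -> : (n == 0) = false by apply/eqP; lia.
  by rewrite andbF.
- have -> : (n == i.+1) = false by apply/eqP; lia. by rewrite andbF IH //; lia.
Qed.

Lemma ol_last_rupd_n (r : rtuple Ag Obs) a o n b :
  ol_last M (rupd r a o n) b n = if b == a then o else ol_last M r b n.
Proof.
case: n => [|n] /=; rewrite obs_at_rupd eqxx andbT; case: (b == a) => //.
- by rewrite last_rcons.
- by rewrite last_rcons.
- by rewrite ol_last_rupd_lt.
Qed.

Lemma mem_ol_rupd (r : rtuple Ag Obs) a o n b i x : i <= n ->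
  (x \in ol M (rupd r a o n) b i) = (x \in ol M r b i) || [&& b == a, i == n & x == o].
Proof.
move=> Hi; case: i Hi => [|i] Hi /=; rewrite obs_at_rupd.
- rewrite [n == 0]eq_sym; case: (b == a) => /=; last by rewrite orbF.
  case: (0 == n) => /=; last by rewrite orbF.
  by rewrite !inE mem_rcons inE; case: (x == o); rewrite ?orbT ?orbF.
- rewrite ol_last_rupd_lt; last lia. rewrite [n == _]eq_sym.
  case: (b == a) => /=; last by rewrite orbF.
  case: (i.+1 == n) => /=; last by rewrite orbF.
  by rewrite !inE mem_rcons inE; case: (x == o); rewrite ?orbT ?orbF.
Qed.

Lemma approx_rupd (r : rtuple Ag Obs) a o b (h h' : seq S) :
  0 < size h ->
  (approx b (rupd r a o (size h).-1) h' h <->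
   approx b r h' h /\ (b = a -> sim M o (nth si h' (size h).-1) (nth si h (size h).-1))).
Proof.
move=> sz; rewrite /approx; split.
- move=> [Es Ha]; split; first split => //.
  + move=> i Hi x Hx; apply: Ha => //.
    by rewrite mem_ol_rupd ?Hx //; lia.
  + move=> Eb; apply: Ha; first lia.
    by rewrite mem_ol_rupd // Eb !eqxx orbT.
- move=> [[Es Ha] Hb]; split => // i Hi x.
  rewrite mem_ol_rupd; last lia.
  case/orP => [Hx|/and3P [/eqP Eb /eqP Ei /eqP Ex]]; first exact: Ha.
  by rewrite Ei Ex; apply: Hb.
Qed.

Lemma ovec_rupd (r : rtuple Ag Obs) a o (h : seq S) :
  ovec h (rupd r a o (size h).-1) = ovupd (ovec h r) a o.
Proof.
apply: functional_extensionality => b; rewrite /ovec /ovupd ol_last_rupd_n //.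
Qed.

Lemma stops_rupd (r : rtuple Ag Obs) a o (h : seq S) :
  stops_at r h -> stops_at (rupd r a o (size h).-1) h.
Proof.
move=> Hs b m Hm; rewrite /rupd; case: (b == a); last exact: Hs.
rewrite filter_rcons /=; have -> : ((size h).-1 == m) = false by apply/eqP; lia.
exact: Hs.
Qed.


Lemma kroot_KT k (h : seq S) (r : rtuple Ag Obs) : kroot (KT k h r) = hlast h.
Proof. by case: k. Qed.

Lemma approx_size a (r : rtuple Ag Obs) (h h' : seq S) : approx a r h' h -> size h' = size h.
Proof. by case. Qed.

Lemma ovec_size (h h' : seq S) (r : rtuple Ag Obs) : size h' = size h -> ovec h' r = ovec h r.
Proof. by rewrite /ovec => ->. Qed.

Lemma UD_KT k : forall (h : seq S) (r : rtuple Ag Obs) a o, 0 < size h ->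
  UD (KT k h r) o a = KT k h (rupd r a o (size h).-1).
Proof.
elim: k => [//|k IH] h r a o sz /=.
congr pair; apply: functional_extensionality => j;
  apply: functional_extensionality => t'; apply: propositional_extensionality; split.
- move=> [t0 [[h' [Hh' [Ha ->]]] [Hs ->]]].
  have Es := approx_size Ha.
  exists h'; split => //; split; last by rewrite IH Es // Es.
  apply/approx_rupd => //; split => // Ej.
  by have := Hs Ej; rewrite kroot_KT !hlast_nth Es.
- move=> [h' [Hh' [Ha ->]]].
  have Es := approx_size Ha.
  move/approx_rupd: Ha => /(_ sz) [Ha Hs].
  exists (KT k h' r); split; first by exists h'.
  split; first by move=> Ej; rewrite kroot_KT !hlast_nth Es; apply: Hs.
  by rewrite IH Es // Es.
Qed.

Lemma ol_stop a (r : rtuple Ag Obs) (h : seq S) : 0 < size h -> stops_at r h ->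
  ol M r a (size h) = [:: ovec h r a].
Proof.
move=> sz Hs; rewrite /ovec; case E: (size h) sz => [//|n] _ /=.
rewrite /obs_at Hs ?E //.
Qed.

Lemma ovec_rcons (r : rtuple Ag Obs) (h : seq S) s : 0 < size h -> stops_at r h ->
  ovec (rcons h s) r = ovec h r.
Proof.
move=> sz Hs; apply: functional_extensionality => a.
rewrite /ovec size_rcons /=; case E: (size h) sz => [//|n] _ /=.
rewrite /obs_at Hs ?E //.
Qed.

Lemma stops_rcons (r : rtuple Ag Obs) (h : seq S) s : 0 < size h -> stops_at r h ->
  stops_at r (rcons h s).
Proof. move=> sz Hs a m Hm; apply: Hs; rewrite size_rcons /= in Hm; lia. Qed.

Lemma approx_rcons a (r : rtuple Ag Obs) (h h' : seq S) s s' : 0 < size h -> stops_at r h ->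
  (approx a r (rcons h' s') (rcons h s) <-> approx a r h' h /\ sim M (ovec h r a) s' s).
Proof.
move=> sz Hs; rewrite /approx !size_rcons; split.
- move=> [[Es] Ha]; split; first split => //.
  + move=> i Hi x Hx; have := Ha i (ltnW Hi) x Hx.
    by rewrite !nth_rcons -Es Hi.
  + have := Ha (size h) (ltac:(by rewrite Es)) (ovec h r a).
    by rewrite ol_stop // inE eqxx !nth_rcons Es ltnn eqxx => /(_ isT).
- move=> [[Es Ha] Hso]; split; first by rewrite Es.
  move=> i; rewrite ltnS leq_eqVlt => /orP [/eqP ->|Hi] x.
  + by rewrite Es ol_stop // inE => /eqP ->; rewrite !nth_rcons Es ltnn eqxx.
  + by move=> Hx; rewrite !nth_rcons Hi -Es Hi; apply: Ha.
Qed.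

Lemma UT_KT k : forall (h : seq S) (r : rtuple Ag Obs) s, 0 < size h -> stops_at r h ->
  UT (KT k h r) s (ovec h r) = KT k (rcons h s) r.
Proof.
elim: k => [|k IH] h r s sz Hs /=; first by rewrite /hlast last_rcons.
rewrite /hlast last_rcons.
congr pair; apply: functional_extensionality => a;
  apply: functional_extensionality => t'; apply: propositional_extensionality; split.
- move=> [t0 [s'' [[h' [Hh' [Ha ->]]] [Hsim [HT ->]]]]].
  have Es := approx_size Ha.
  have sz' : 0 < size h' by rewrite Es.
  have Hs' : stops_at r h' by move=> b m; rewrite Es; apply: Hs.
  exists (rcons h' s''); split.
  + apply/history_rcons; first by case: (h') sz'.
    by rewrite kroot_KT in HT.
  + split; first by apply/approx_rcons.
    by rewrite -IH // (ovec_size _ Es).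
- move=> [h'' [Hh'' [Ha ->]]].
  have Es := approx_size Ha.
  case/lastP E: h'' Es Ha Hh'' => [|h' s''] Es Ha Hh''; first by rewrite size_rcons in Es.
  rewrite !size_rcons in Es; case: Es => Es.
  have sz' : 0 < size h' by rewrite Es.
  have Hs' : stops_at r h' by move=> b m; rewrite Es; apply: Hs.
  have hn : h' <> [::] by case: (h') sz'.
  move/(history_rcons _ hn): Hh'' => [Hh' HT].
  have [Ha1 Hsim] := (approx_rcons _ _ _ _ sz Hs).1 Ha.
  exists (KT k h' r), s''; split; first by exists h'.
  split => //; split; first by rewrite kroot_KT.
  by rewrite -(ovec_size _ Es) IH.
Qed.

Lemma stops_pref (r : rtuple Ag Obs) (pi : nat -> S) n m : stops_at r (pref pi n) -> n <= m ->
  stops_at r (pref pi m).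
Proof.
move=> Hs Hm a k; rewrite /pref size_mkseq /= => Hk; apply: Hs; rewrite size_mkseq /=; lia.
Qed.

Lemma UTn_KT k (r : rtuple Ag Obs) (pi : nat -> S) n j : stops_at r (pref pi n) ->
  ovec (pref pi (n + j)) r = ovec (pref pi n) r /\
  UTn (KT k (pref pi n) r) (psuffix pi n) (ovec (pref pi n) r) j = KT k (pref pi (n + j)) r.
Proof.
move=> Hs; elim: j => [|j [IH1 IH2]]; first by rewrite addn0.
have Hsj : stops_at r (pref pi (n + j)) by apply: stops_pref Hs _; lia.
have sz : 0 < size (pref pi (n + j)) by rewrite size_mkseq.
have E : pref pi (n + j.+1) = rcons (pref pi (n + j)) (pi (n + j.+1)).
  by rewrite addnS /pref mkseqS.
rewrite E ovec_rcons // IH1; split => //=.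
by rewrite IH2 /psuffix -IH1 UT_KT.
Qed.


Lemma psuffix2 (pi : nat -> S) n j : psuffix (psuffix pi n) j = psuffix pi (n + j).
Proof. by apply: functional_extensionality => i; rewrite /psuffix addnA. Qed.

Scheme hform_mut := Induction for hform Sort Prop
  with pform_mut := Induction for pform Sort Prop.

Definition PH_stmt (phi : hform Ag Obs) := forall k (h : seq S) (r : rtuple Ag Obs),
  kdepth phi <= k -> history h -> stops_at r h ->
  (semN h r phi <-> semI (KT k h r) (ovec h r) phi).

Definition PP_stmt (p : pform Ag Obs) := forall k (pi : nat -> S) n (r : rtuple Ag Obs),
  kdepthP p <= k -> ispath pi -> stops_at r (pref pi n) ->
  (semP pi n r p <-> semIP (psuffix pi n) (KT k (pref pi n) r) (ovec (pref pi n) r) p).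

Lemma shift_lemma (q : pform Ag Obs) (IH : PP_stmt q) k (pi : nat -> S) n (r : rtuple Ag Obs) j :
  kdepthP q <= k -> ispath pi -> stops_at r (pref pi n) ->
  (semP pi (n + j) r q <->
   semIP (psuffix (psuffix pi n) j) (UTn (KT k (pref pi n) r) (psuffix pi n) (ovec (pref pi n) r) j)
     (ovec (pref pi n) r) q).
Proof.
move=> Hk Pp Hs; have [E1 E2] := UTn_KT k j Hs.
rewrite E2 -E1 psuffix2; apply: IH => //; apply: stops_pref Hs _; lia.
Qed.

Lemma main_mut : forall phi, PH_stmt phi.
Proof.
apply: (@hform_mut Ag Obs PH_stmt PP_stmt).
- move=> p k h r _ _ _ /=; by rewrite kroot_KT.
- move=> g IH k h r Hk Hh Hs /=; by rewrite (IH k h r Hk Hh Hs).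
- move=> g1 IH1 g2 IH2 k h r /=; rewrite geq_max => /andP [Hk1 Hk2] Hh Hs.
  by rewrite (IH1 k h r Hk1 Hh Hs) (IH2 k h r Hk2 Hh Hs).
- move=> p IH k h r /= Hk Hh Hs.
  have hn : h <> [::] by case: Hh.
  have sz : 0 < size h by case: (h) hn.
  split.
  + move=> H pi Ppi P0; rewrite kroot_KT in P0.
    have [Pg Hg] := glueP Hh Ppi P0.
    have := H _ Pg Hg.
    have Ep := pref_prefix hn Hg.
    rewrite (IH k _ _ _ Hk Pg) ?Ep // glue_suffix //.
  + move=> H pi Ppi Hp.
    have Ep := pref_prefix hn Hp.
    rewrite (IH k _ _ _ Hk Ppi) ?Ep //; apply: H.
    * by move=> i; rewrite /psuffix addnS; apply: Ppi.
    * by rewrite kroot_KT /psuffix addn0 hlast_nth Hp // ; lia.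
- move=> a g IH k h r /= Hk Hh Hs.
  case: k Hk => [//|k] Hk.
  split.
  + move=> H t' [h' [Hh' [Ha ->]]].
    have Es := approx_size Ha.
    rewrite -(ovec_size _ Es) -IH //; first by apply: H.
    by move=> b m; rewrite Es; apply: Hs.
  + move=> H h' Hh' Ha.
    have Es := approx_size Ha.
    rewrite (IH k) //; last by move=> b m; rewrite Es; apply: Hs.
    rewrite (ovec_size _ Es); apply: H; by exists h'.
- move=> a o g IH k h r /= Hk Hh Hs.
  have sz : 0 < size h by case: Hh; case: (h).
  rewrite (IH k) //; last exact: stops_rupd.
  by rewrite ovec_rupd UD_KT.
- move=> g IH k pi n r /= Hk Pp Hs; apply: IH => //; exact: pref_history.
- move=> q IH k pi n r /= Hk Pp Hs; by rewrite (IH k pi n r Hk Pp Hs).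
- move=> q1 IH1 q2 IH2 k pi n r /=; rewrite geq_max => /andP [Hk1 Hk2] Pp Hs.
  by rewrite (IH1 k pi n r Hk1 Pp Hs) (IH2 k pi n r Hk2 Pp Hs).
- move=> q IH k pi n r /= Hk Pp Hs.
  have := shift_lemma IH 1 Hk Pp Hs; by rewrite addn1.
- move=> q1 IH1 q2 IH2 k pi n r /=; rewrite geq_max => /andP [Hk1 Hk2] Pp Hs.
  split.
  + move=> [m [Hm [H2 H1]]]; exists (m - n); split.
    * by rewrite -(shift_lemma IH2 _ Hk2 Pp Hs) subnKC.
    * move=> j Hj; rewrite -(shift_lemma IH1 _ Hk1 Pp Hs); apply: H1; lia.
  + move=> [m [H2 H1]]; exists (n + m); split; first lia.
    split; first by rewrite (shift_lemma IH2 _ Hk2 Pp Hs).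
    move=> j Hj Hjm; have := H1 (j - n) ltac:(lia).
    by rewrite -(shift_lemma IH1 _ Hk1 Pp Hs) subnKC.
Qed.

End Proof.

Theorem mainTheorem6 (Ag Obs : finType) (HObs : 0 < #|Obs|) (M : model Ag Obs)
  (phi : hform Ag Obs) (h : seq (st M)) (r : Ag -> seq (Obs * nat)) :
  history h -> stops_at r h ->
  (semN h r phi <-> semI (KT (kdepth phi) h r) (ovec h r) phi).
Proof. move=> Hh Hs; exact: (@main_mut Ag Obs M phi (kdepth phi) h r (leqnn _) Hh Hs). Qed.
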